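(* Let $s,t,z$ be positive integers, $p=\min\{\lfloor\frac{z-1}{ts-t}\rfloor,t-1\}$ (with $p=t-1$ when $s=1$), and let $N_{\text{PolyDot-CMPC}}$ and $N_{\text{SSMM}}$ be as in the context. Then $N_{\text{PolyDot-CMPC}}<N_{\text{SSMM}}$ in the two regions 1. $z>\max\{ts,\,ts-t+\frac{pts}{t-1}\}$, $t\ne1$; 2. $\frac{t-1}{t-2}(st-t)<z\le ts$; and for all other values of $s,t,z$, $N_{\text{PolyDot-CMPC}}\ge N_{\text{SSMM}}$.
   Context: $N_{\text{PolyDot-CMPC}}$ is the number of workers needed by the PolyDot-CMPC scheme, given by: with $\theta'=2ts-t$ and $\upsilon'=\max\{ts-2t-s+2,\frac{ts-2t+1}{2}\}$, $N_{\text{PolyDot-CMPC}}=(p+2)ts+\theta'(t-1)+2z-1$ if $ts<z$ or $t=1$; $=2ts+\theta'(t-1)+3z-1$ if $ts-t<z\le ts$, $s,t\ne1$; $=2ts+\theta'(t-1)+2z-1$ if $ts-2t<z\le ts-t$, $s,t\ne1$; $=(t+1)ts+(t-1)(z+t-1)+2z-1$ if $\upsilon'<z\le ts-2t$, $s,t\ne1$; $=\theta't+z$ if $z\le\upsilon'$, $s,t\ne1$; $=t^2+2t+tz-1$ if $s=1$, $t\ge z$, $t\ne1$. $N_{\text{SSMM}}=(t+1)(ts+z)-1$ is the number of workers of the SSMM baseline. Here $s,t$ are the numbers of row/column partitions and $z$ the number of colluding workers. *)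

(* Defs.v *)
From mathcomp Require Import all_boot all_order all_algebra.
Set Implicit Arguments. Unset Strict Implicit. Unset Printing Implicit Defensive.
Import Order.TTheory GRing.Theory Num.Theory.

(* All counts are natural numbers; comparisons with the (possibly
   fractional / possibly negative) thresholds are done in [rat]. *)

Definition qn (n : nat) : rat := (n%:R)%R.

Definition pCMPC (s t z : nat) : nat :=
  if s == 1 then t - 1 else minn ((z - 1) %/ (t * s - t)) (t - 1).

Definition theta' (s t : nat) : nat := 2 * t * s - t.

Definition upsilon' (s t : nat) : rat :=
  (Num.max (qn (t * s) - 2 * qn t - qn s + 2) ((qn (t * s) - 2 * qn t + 1) / 2))%R.

(* N_{PolyDot-CMPC}, case by case as in the paper (the cases are exhaustive
   for positive s, t, z; the final [0] branch is unreachable). *)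
Definition N_PolyDot (s t z : nat) : nat :=
  let ts := t * s in
  if (ts < z) || (t == 1) then
    (pCMPC s t z + 2) * ts + theta' s t * (t - 1) + 2 * z - 1
  else if (s != 1) && (t != 1) && (ts - t < z <= ts) then
    2 * ts + theta' s t * (t - 1) + 3 * z - 1
  else if (s != 1) && (t != 1) && ((qn ts - 2 * qn t < qn z)%R && (z <= ts - t)) then
    2 * ts + theta' s t * (t - 1) + 2 * z - 1
  else if (s != 1) && (t != 1) && ((upsilon' s t < qn z)%R && (qn z <= qn ts - 2 * qn t)%R) then
    (t + 1) * ts + (t - 1) * (z + t - 1) + 2 * z - 1
  else if (s != 1) && (t != 1) && (qn z <= upsilon' s t)%R then
    theta' s t * t + z
  else if (s == 1) && (z <= t) && (t != 1) then
    t ^ 2 + 2 * t + t * z - 1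
  else 0.

Definition N_SSMM (s t z : nat) : nat := (t + 1) * (t * s + z) - 1.

Definition region1 (s t z : nat) : Prop :=
  t <> 1 /\
  (Num.max (qn (t * s)) (qn (t * s) - qn t + qn (pCMPC s t z * (t * s)) / qn (t - 1))
     < qn z)%R.

(* Region 2: (t-1)/(t-2) (st - t) < z <= ts; read with
   t > 2 (so that the coefficient (t-1)/(t-2) is defined) and s <> 1
   (the region belongs to the s,t <> 1 cases of N_PolyDot). *)
Definition region2 (s t z : nat) : Prop :=
  2 < t /\ s <> 1 /\
  (qn (t - 1) / qn (t - 2) * qn (s * t - t) < qn z)%R /\ z <= t * s.

(* Main.v *)
Require Import Defs.
From mathcomp Require Import all_boot all_order all_algebra.
From mathcomp Require Import zify ring lra.
Import Order.TTheory GRing.Theory Num.Theory.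

Ltac to_rat H := move: H; rewrite -?(ltr_nat rat) -?(ler_nat rat) ?natrD ?natrM => H.

Lemma C3 s t z : ((qn (t*s) - 2 * qn t < qn z)%R) = (t*s < z + 2*t).
Proof.
rewrite /qn; apply/idP/idP => H.
- rewrite ltnNge; apply/negP => H'; to_rat H'; lra.
- to_rat H; lra.
Qed.

Lemma C4b s t z : ((qn z <= qn (t*s) - 2 * qn t)%R) = (z + 2*t <= t*s).
Proof.
rewrite /qn; apply/idP/idP => H.
- rewrite leqNgt; apply/negP => H'; to_rat H'; lra.
- to_rat H; lra.
Qed.

Lemma C4a s t z : ((upsilon' s t < qn z)%R) =
   ((t*s + 2 < z + 2*t + s) && (t*s + 1 < 2*z + 2*t)).
Proof.
rewrite /upsilon' gt_max /qn; congr andb; apply/idP/idP => H.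
- rewrite ltnNge; apply/negP => H'; to_rat H'; lra.
- to_rat H; lra.
- rewrite ltnNge; apply/negP => H'; to_rat H'; lra.
- to_rat H; lra.
Qed.

Lemma C5 s t z : ((qn z <= upsilon' s t)%R) =
   ~~ ((t*s + 2 < z + 2*t + s) && (t*s + 1 < 2*z + 2*t)).
Proof. by rewrite -C4a leNgt. Qed.

Lemma R1 s t z : 1 < t -> t * s < z ->
  region1 s t z <-> (t*s*t + t + pCMPC s t z*(t*s) + z < z*t + t*s + t*t).
Proof.
move=> ht hz; rewrite /region1 gt_max /qn.
have ypos : (0 < (t-1)%:R :> rat)%R by rewrite ltr0n subn_gt0.
have -> : ((((t * s)%:R - t%:R + (pCMPC s t z * (t * s))%:R / (t - 1)%:R) : rat) < z%:R)%R =
   ((((t * s)%:R - t%:R) * (t - 1)%:R + (pCMPC s t z * (t * s))%:R : rat) < z%:R * (t - 1)%:R)%R.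
  by rewrite -(ltr_pM2r ypos) mulrDl divfK // gt_eqF.
rewrite natrB ?(ltnW ht) //.
have -> : ((t * s)%:R < z%:R :> rat)%R by rewrite ltr_nat.
split.
- case=> _ /= H; rewrite ltnNge; apply/negP => H'; to_rat H'; lra.
- move=> H; split; first by move=> e; rewrite e in ht.
  to_rat H; rewrite /=; lra.
Qed.

Lemma R1nec s t z : region1 s t z -> t * s < z.
Proof. by case=> _; rewrite gt_max /qn ltr_nat => /andP[]. Qed.

Lemma R2 s t z : 1 < t -> 1 < s ->
  region2 s t z <-> (2 < t /\ (t-1)*(s*t-t) < z*(t-2) /\ z <= t*s).
Proof.
move=> ht hs; rewrite /region2.
have [t2|t2] := leqP t 2.
  by split; case; lia.
have ypos : (0 < qn (t-2) :> rat)%R by rewrite /qn ltr0n subn_gt0.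
rewrite mulrAC ltr_pdivrMr // /qn -!natrM ltr_nat.
split; first by case=> _ [_ [h1 h2]].
by case=> _ [h1 h2]; split => //; split => //; lia.
Qed.

Lemma reduce (A B : Prop) (x y : nat) : (A <-> B) ->
  ((B -> x < y) /\ (~B -> y <= x)) -> ((A -> x<y) /\ (~A -> y<=x)).
Proof. by move=> [f g] [h k]; split => H; [apply: h; apply: f | apply: k => /g]. Qed.

Theorem lemma2 (s t z : nat) (hs : 0 < s) (ht : 0 < t) (hz : 0 < z) :
  ((region1 s t z \/ region2 s t z) -> N_PolyDot s t z < N_SSMM s t z) /\
  (~ (region1 s t z \/ region2 s t z) -> N_SSMM s t z <= N_PolyDot s t z).
Proof.
have [et|t1] := eqVneq t 1.
  subst t.
  have E : N_PolyDot s 1 z = N_SSMM s 1 z.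
    rewrite /N_PolyDot /N_SSMM /pCMPC /theta' eqxx orbT subnn minn0 muln0 if_same; lia.
  rewrite E; split; last by [].
  by case=> [[]|[]].
have ht2 : 1 < t by lia.
have [hzts|hzts] := ltnP (t*s) z.
  have E : N_PolyDot s t z = (pCMPC s t z + 2) * (t*s) + theta' s t * (t - 1) + 2 * z - 1
    by rewrite /N_PolyDot hzts.
  apply: (@reduce _ (t*s*t + t + pCMPC s t z*(t*s) + z < z*t + t*s + t*t)).
    split; first by case=> [/(@R1 s t z ht2 hzts) //| [_ [_ [_ h]]]]; lia.
    by move=> h; left; apply/(@R1 s t z ht2 hzts).
  rewrite E /N_SSMM /theta'.
  move: (pCMPC s t z) hzts => p.
  rewrite -(subnK ht2) -(subnK hs).
  move: (t-2) (s-1) => a b. rewrite ?addnK.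
  have -> : 2 * (a + 2) * (b + 1) = (a+2)*(2*b+1) + (a+2) by ring.
  rewrite addnK.
  have -> : a + 2 - 1 = a + 1 by lia.
  by move=> h; split => h'; nia.
have [es|s1] := eqVneq s 1.
  subst s.
  have E : N_PolyDot 1 t z = t ^ 2 + 2 * t + t * z - 1.
    rewrite /N_PolyDot ltnNge hzts (negbTE t1) eqxx /=. rewrite muln1 in hzts. by rewrite hzts.
  apply: (@reduce _ False).
    split => //; case=> [/R1nec | [_ []] //]; lia.
  rewrite E /N_SSMM.
  move: hzts; rewrite -(subnK ht2).
  move: (t-2) => a. rewrite ?addnK.
  by split; nia.
have hs2 : 1 < s by lia.
apply: (@reduce _ (2 < t /\ (t-1)*(s*t-t) < z*(t-2) /\ z <= t*s)).
  split; first by case=> [/R1nec | /(@R2 s t z ht2 hs2) //]; lia.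
  by move=> h; right; apply/(@R2 s t z ht2 hs2).
rewrite /N_PolyDot C3 C4b C4a C5 ltnNge hzts (negbTE t1) (negbTE s1) /= /N_SSMM /theta'.
move: hzts; rewrite -(subnK ht2) -(subnK hs2).
move: (t-2) (s-2) => a b. rewrite ?addnK => hzts.
have -> : 2 * (a + 2) * (b + 2) = (a+2)*(2*b+3) + (a+2) by ring.
rewrite addnK.
have -> : a + 2 - 1 = a + 1 by lia.
rewrite [(b + 2) * (a + 2)]mulnC.
have -> : (a + 2) * (b + 2) - (a + 2) = (a+2)*(b+1).
  have -> : (a + 2) * (b + 2) = (a+2)*(b+1) + (a+2) by ring.
  by rewrite addnK.
have -> : z + (a + 2) - 1 = z + a + 1 by lia.
have -> : ((a+2)*(b+2) < z) = false by rewrite ltnNge hzts.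
rewrite /=.
case: ifP => c1; first by split => h; nia.
case: ifP => c2; first by split => h; nia.
case: ifP => c3; first by split => h; nia.
case: ifP => c4; first by split => h; nia.
exfalso; nia.
Qed.
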